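(* Let $\gamma=\begin{pmatrix}A&B\\C&D\end{pmatrix}\in\mathbf{Sp}(2n,\mathbb R)$ with $\gamma\tau(\gamma)=I$ and $C=0$. Then there exists $h\in\mathbf{Sp}(2n,\mathbb R)$ with $\gamma=\tau(h)h^{-1}$ (i.e. the 1-cocycle $f_\gamma$ is cohomologically trivial).
   Context: $\mathbf{Sp}(2n,\mathbb R)$: real $2n\times2n$ matrices $g=\begin{pmatrix}A&B\\C&D\end{pmatrix}$ ($n\times n$ blocks) with ${}^tgJg=J$, $J=\begin{pmatrix}0&I\\-I&0\end{pmatrix}$. $\tau\begin{pmatrix}A&B\\C&D\end{pmatrix}=\begin{pmatrix}A&-B\\-C&D\end{pmatrix}$. $f_\gamma$ denotes the cocycle $\mathrm{Gal}(\mathbb C/\mathbb R)=\{1,\tau\}\to\mathbf{Sp}(2n,\mathbb R)$, $\tau\mapsto\gamma$. *)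

(* Defs.v *)
From mathcomp Require Import all_boot all_order all_algebra.
From mathcomp Require Import reals.
Set Implicit Arguments. Unset Strict Implicit. Unset Printing Implicit Defensive.
Import GRing.Theory Num.Theory.
Local Open Scope ring_scope.

(* 2n x 2n real matrices are 'M[R]_(n + n), with n x n blocks
   g = block_mx A B C D, A = ulsubmx g, B = ursubmx g, C = dlsubmx g, D = drsubmx g. *)

Definition Jmx (R : realType) (n : nat) : 'M[R]_(n + n) :=
  block_mx 0 1%:M (- 1%:M) 0.

Definition symplectic (R : realType) (n : nat) (g : 'M[R]_(n + n)) : Prop :=
  g^T *m Jmx R n *m g = Jmx R n.

Definition tau (R : realType) (n : nat) (g : 'M[R]_(n + n)) : 'M[R]_(n + n) :=
  block_mx (ulsubmx g) (- ursubmx g) (- dlsubmx g) (drsubmx g).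

(* Main.v *)
Require Import Defs.
From mathcomp Require Import all_boot all_order all_algebra.
From mathcomp Require Import reals ring.
Set Implicit Arguments. Unset Strict Implicit. Unset Printing Implicit Defensive.
Import GRing.Theory Num.Theory.
Local Open Scope ring_scope.

Section S.
Variable R : realType.

Lemma sqsum0 n (x : 'rV[R]_n) j : (x *m x^T) 0 0 = 0 -> x 0 j = 0.
Proof.
rewrite !mxE => H.
have P0 : forall i, predT i -> 0 <= x 0 i * x^T i 0.
  by move=> i _; rewrite mxE -expr2 sqr_ge0.
have := @psumr_eq0P _ _ predT (fun j => x 0 j * x^T j 0) P0 H j isT.
rewrite mxE => /eqP; rewrite mulf_eq0 orbb => /eqP; apply.
Qed.

Lemma sqsum_ge0 n (x : 'rV[R]_n) : 0 <= (x *m x^T) 0 0.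
Proof. rewrite !mxE; apply: sumr_ge0 => i _; by rewrite mxE -expr2 sqr_ge0. Qed.

Lemma G_unit n (A : 'M[R]_n) : (1%:M + A^T *m A) \in unitmx.
Proof.
rewrite -row_free_unit -kermx_eq0 -submx0; apply/row_subP => i.
set v := row i _.
have Hv : v *m (1%:M + A^T *m A) = 0 by apply/sub_kermxP; exact: row_sub.
have E : (v *m v^T + (v *m A^T) *m (v *m A^T)^T) 0 0 = 0.
  rewrite trmx_mul trmxK.
  have -> : v *m v^T + v *m A^T *m (A *m v^T) = v *m (1%:M + A^T *m A) *m v^T.
    by rewrite mulmxDr mulmx1 mulmxDl !mulmxA.
  by rewrite Hv mul0mx mxE.
move/eqP: E; rewrite mxE; rewrite paddr_eq0 ?sqsum_ge0 // => /andP[/eqP E _].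
have -> : v = 0 by apply/rowP => j; rewrite [RHS]mxE; exact: sqsum0 E.
by rewrite sub0mx.
Qed.

Lemma sympl_block_eq n (X Y Z W : 'M[R]_n) :
 (block_mx X Y Z W)^T *m Jmx R n *m block_mx X Y Z W =
 block_mx (X^T *m Z - Z^T *m X) (X^T *m W - Z^T *m Y)
          (Y^T *m Z - W^T *m X) (Y^T *m W - W^T *m Y).
Proof.
rewrite -mulmxA /Jmx mulmx_block tr_block_mx mulmx_block.
by rewrite !mul0mx !mul1mx !mulNmx !mul1mx !add0r !addr0 !mulmxN.
Qed.

Lemma sympl_scale_block n (c : R) (X Y Z W : 'M[R]_n) :
  X^T *m Z = Z^T *m X -> Y^T *m W = W^T *m Y -> X^T *m W - Z^T *m Y = c%:M ->
  (block_mx X Y Z W)^T *m Jmx R n *m block_mx X Y Z W = c *: Jmx R n.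
Proof.
move=> H1 H2 H3; rewrite sympl_block_eq H1 H2 H3 !subrr /Jmx scale_block_mx.
have -> : Y^T *m Z - W^T *m X = - (X^T *m W - Z^T *m Y)^T.
  by rewrite linearB /= !trmx_mul !trmxK opprB.
by rewrite H3 tr_scalar_mx !scaler0 scalerN scalemx1.
Qed.

Lemma tau_block n (X Y Z W : 'M[R]_n) :
  tau (block_mx X Y Z W) = block_mx X (-Y) (-Z) W.
Proof. by rewrite /tau block_mxKul block_mxKur block_mxKdl block_mxKdr. Qed.

Lemma tauZ n c (g : 'M[R]_(n + n)) : tau (c *: g) = c *: tau g.
Proof.
by rewrite -[g]submxK scale_block_mx !tau_block scale_block_mx !scalerN.
Qed.

Lemma tauM n (a b : 'M[R]_(n + n)) : tau (a *m b) = tau a *m tau b.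
Proof.
rewrite -[a]submxK -[b]submxK mulmx_block !tau_block mulmx_block.
by rewrite !mulNmx !mulmxN !opprK !opprD.
Qed.

Lemma sympl_mul n (a b : 'M[R]_(n + n)) :
  symplectic a -> symplectic b -> symplectic (a *m b).
Proof.
rewrite /symplectic => Ha Hb.
by rewrite trmx_mul -!mulmxA [a^T *m _]mulmxA [a^T *m _ *m _]mulmxA Ha mulmxA.
Qed.

Lemma sympl_unit n (a : 'M[R]_(n + n)) : symplectic a -> a \in unitmx.
Proof.
rewrite /symplectic => Ha.
have JJ : Jmx R n *m (- Jmx R n) = 1%:M.
  rewrite /Jmx mulmxN mulmx_block !mul0mx !mulmx0 !add0r !addr0 mulmxN.
  by rewrite mulmx1 opp_block_mx !opprK oppr0 mulNmx mul1mx opprK -scalar_mx_block.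
have dJ : \det (Jmx R n) != 0.
  apply/negP => /eqP d0; move: (congr1 determinant JJ).
  by rewrite det_mulmx d0 mul0r det1 => /eqP; rewrite eq_sym oner_eq0.
rewrite unitmxE unitfE; apply/negP => /eqP d0.
move: (congr1 determinant Ha); rewrite !det_mulmx d0 mulr0 => /eqP.
by rewrite eq_sym (negbTE dJ).
Qed.


Section Inv.
Variables (n : nat) (A : 'M[R]_n).
Hypothesis AA : A *m A = 1%:M.
Let E := 1%:M + A.
Let F := 1%:M - A.
Let G := 1%:M + A^T *m A.

Lemma AE : A *m E = E. Proof. by rewrite /E mulmxDr mulmx1 AA addrC. Qed.
Lemma EA : E *m A = E. Proof. by rewrite /E mulmxDl mul1mx AA addrC. Qed.
Lemma AF : A *m F = - F. Proof. by rewrite /F mulmxBr mulmx1 AA opprB. Qed.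
Lemma FA : F *m A = - F. Proof. by rewrite /F mulmxBl mul1mx AA opprB. Qed.
Lemma FE : F *m E = 0. Proof. by rewrite {1}/F mulmxBl mul1mx AE subrr. Qed.
Lemma EF : E *m F = 0. Proof. by rewrite {1}/E mulmxDl mul1mx AF subrr. Qed.
Lemma EE : E *m E = E + E. Proof. by rewrite {1}/E mulmxDl mul1mx AE. Qed.
Lemma FF : F *m F = F + F. Proof. by rewrite {1}/F mulmxBl mul1mx AF opprK. Qed.
Lemma GT : G^T = G. Proof. by rewrite /G linearD /= trmx1 trmx_mul trmxK. Qed.
Lemma GF : G *m F = F^T *m G.
Proof.
have AtAt : A^T *m A^T = 1%:M by rewrite -trmx_mul AA trmx1.
rewrite /G /F mulmxDl mul1mx mulmxBr mulmx1 -mulmxA AA mulmx1.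
rewrite linearB /= trmx1 mulmxBl mul1mx mulmxDr mulmx1 mulmxA AtAt mul1mx.
by rewrite addrACA opprD (addrC (- A^T)).
Qed.
Lemma EFsum : E + F = (1 + 1)%:M.
Proof. by rewrite /E /F raddfD /= addrACA subrr addr0. Qed.
End Inv.

End S.

Theorem lemma3p10 (R : realType) (n : nat) (gamma : 'M[R]_(n + n)) :
  symplectic gamma ->
  gamma *m tau gamma = 1%:M ->
  dlsubmx gamma = 0 ->
  exists h : 'M[R]_(n + n),
    symplectic h /\ h \in unitmx /\ gamma = tau h *m invmx h.
Proof.
move=> Hs Hinv Hdl.
pose A := ulsubmx gamma; pose B := ursubmx gamma; pose D := drsubmx gamma.
have Eg : gamma = block_mx A B 0 D by rewrite -Hdl submxK.
move: Hs Hinv; rewrite Eg => Hs Hinv.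
move: Hs; rewrite /symplectic sympl_block_eq => /eq_block_mx [_ H12 _ H22].
move: Hinv; rewrite tau_block mulmx_block (scalar_mx_block n n 1) => /eq_block_mx [AA1 AB _ _].
have AA : A *m A = 1%:M by rewrite -AA1 oppr0 mulmx0 addr0.
have AtAt : A^T *m A^T = 1%:M by rewrite -trmx_mul AA trmx1.
have AtD : A^T *m D = 1%:M by rewrite -H12 trmx0 mul0mx subr0.
have DA : D = A^T by rewrite -[D]mul1mx -AtAt -mulmxA AtD mulmx1.
have BA : B *m A^T = A *m B.
  by apply/eqP; rewrite -DA -subr_eq0 addrC; apply/eqP; rewrite -mulmxN.
have ABs : (A *m B)^T = A *m B.
  by apply/eqP; rewrite trmx_mul -subr_eq0; apply/eqP; rewrite -H22 DA trmxK.
rewrite DA.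
pose c : R := 2^-1.
have cc : c + c = 1 by rewrite /c [RHS](splitr 1) mul1r.
have cc4 : c * c * 4%:R = 1.
  have -> : (4%:R : R) = 2%:R * 2%:R by rewrite -natrM.
  by rewrite mulrACA /c mulVf ?mulr1 // pnatr_eq0.
pose Q := - (c *: (A *m B)).
have Qs : Q^T = Q by rewrite /Q linearN /= linearZ /= ABs.
pose k := block_mx 1%:M Q 0 1%:M.
have ks : symplectic k.
  have H1 : (1%:M : 'M[R]_n)^T *m (0 : 'M[R]_n) = (0 : 'M[R]_n)^T *m 1%:M by rewrite trmx0 mulmx0 mul0mx.
  have H2 : Q^T *m 1%:M = (1%:M)^T *m Q by rewrite Qs trmx1 mulmx1 mul1mx.
  have H3 : (1%:M : 'M[R]_n)^T *m 1%:M - (0 : 'M[R]_n)^T *m Q = 1%:M.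
    by rewrite trmx1 mulmx1 trmx0 mul0mx subr0.
  by have := sympl_scale_block H1 H2 H3; rewrite scale1r.
pose E := 1%:M + A; pose F := 1%:M - A; pose G := 1%:M + A^T *m A.
pose Gi := invmx G.
have Gu : G \in unitmx := G_unit A.
pose h0 := block_mx E (F *m Gi) (- (F^T *m G)) E^T.
have h0s : h0^T *m Jmx R n *m h0 = 4%:R *: Jmx R n.
  apply: sympl_scale_block.
  - rewrite mulmxN mulmxA -trmx_mul (FE AA) trmx0 mul0mx oppr0.
    by rewrite linearN /= trmx_mul trmxK (GT A) mulNmx -mulmxA (FE AA) mulmx0 oppr0.
  - rewrite trmx_mul -mulmxA -trmx_mul (EF AA) trmx0 mulmx0.
    by rewrite trmxK mulmxA (EF AA) mul0mx.
  rewrite -trmx_mul (EE AA) linearN /= trmx_mul trmxK (GT A) mulNmx opprK.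
  rewrite mulmxA -(mulmxA G) (FF AA) mulmxDr (GF AA) mulmxDl -!mulmxA mulmxV //.
  rewrite mulmx1 linearD /= addrACA -linearD /= (EFsum A) tr_scalar_mx -raddfD /=.
  by congr (_%:M); ring.
pose hh := c *: h0.
have hhs : symplectic hh.
  rewrite /symplectic /hh linearZ /= [(c *: h0)^T]linearZ /= -!scalemxAl scalerA h0s scalerA.
  by rewrite cc4 scale1r.
pose g0 := block_mx A 0 0 A^T.
have Th0 : tau h0 = g0 *m h0.
  rewrite /h0 tau_block /g0 mulmx_block !mul0mx !addr0 !add0r (AE AA).
  rewrite mulmxA (AF AA) mulNmx mulmxN mulmxA -trmx_mul (FA AA) linearN /=.
  by rewrite opprK linearN /= mulNmx opprK -trmx_mul (EA AA).
have Tk : tau k *m g0 = block_mx A B 0 A^T *m k.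
  rewrite /k tau_block /g0 !mulmx_block !mul0mx !mulmx0 !mul1mx !mulmx1.
  rewrite !addr0 !add0r oppr0 mul0mx.
  congr block_mx.
  rewrite /Q !mulNmx opprK -scalemxAl -mulmxA BA mulmxA AA mul1mx.
  rewrite mulmxN -scalemxAr mulmxA AA mul1mx.
  by apply/eqP; rewrite eq_sym addrC subr_eq -scalerDl cc scale1r.
pose h := k *m hh.
have hs : symplectic h by apply: sympl_mul.
have hu : h \in unitmx by apply: sympl_unit.
exists h; split => //; split => //.
have -> : tau h = block_mx A B 0 A^T *m h.
  by rewrite /h /hh tauM tauZ Th0 -!scalemxAr !mulmxA Tk.
by rewrite mulmxK.
Qed.
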